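(* Let $\mathcal R$ be a commutative ring and $\mathcal A$ an associative $\mathcal R$-algebra (not necessarily with identity) together with pairwise orthogonal idempotents $e_i$ ($i\in I$) such that $\mathcal A=\bigoplus_{i,i'\in I}e_i\mathcal Ae_{i'}$ and each $e_i\mathcal Ae_{i'}$ is a free $\mathcal R$-module. Let $\mathcal B=\{a_j\}_{j\in J}$ be an $\mathcal R$-basis of $\mathcal A$ such that, for all $i,i'$, the nonzero elements among $\{e_ia_je_{i'}\}_{j\in J}$ form a basis of $e_i\mathcal Ae_{i'}$, $\mathcal B=\bigcup_{i,i'}e_i\mathcal Be_{i'}$, and every $e_i$ lies in $\mathcal B$; for $j\in J$ let $ro(j),co(j)\in I$ be the unique indices with $e_{ro(j)}a_j=a_j$ and $a_je_{co(j)}=a_j$. Let $\mathfrak L$ be the set of formal (possibly infinite) linear combinations $f=\sum_{j\in J}f_ja_j$, $f_j\in\mathcal R$, and for $i\in I$ set $J(e_i,f)=\{j:f_j\ne0,\ ro(j)=i\}$, $J(f,e_i)=\{j:f_j\ne0,\ co(j)=i\}$. Define $${}^\dagger\widehat{\mathcal A}=\{f\in\mathfrak L:|J(e_i,f)|<\infty\ \forall i\},\quad \widehat{\mathcal A}^\dagger=\{f\in\mathfrak L:|J(f,e_i)|<\infty\ \forall i\},\quad \widehat{\mathcal A}={}^\dagger\widehat{\mathcal A}\cap\widehat{\mathcal A}^\dagger,$$ with product $\bigl(\sum_sf_sa_s\bigr)\bigl(\sum_tg_ta_t\bigr)=\sum_{s,t}f_sg_t\,a_sa_t$ (products $a_sa_t$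 computed in $\mathcal A$). Then this product is well defined on ${}^\dagger\widehat{\mathcal A}$ and on $\widehat{\mathcal A}^\dagger$, making each of them an associative $\mathcal R$-algebra with identity $1=\sum_{i\in I}e_i$, and $\widehat{\mathcal A}$ is a subalgebra with the same identity. *)

(* Defs.v *)
From HB Require Import structures.
From mathcomp Require Import all_boot all_algebra.
From Stdlib Require Import ClassicalEpsilon.

Set Implicit Arguments.
Unset Strict Implicit.
Unset Printing Implicit Defensive.

Import GRing.Theory.
Local Open Scope ring_scope.

Section Defs.
Variable R : comPzRingType.

Definition fin_supp (T : eqType) (F : T -> R) : Prop :=
  exists s : seq T, forall x, F x != 0 -> x \in s.

(* sum of a finitely supported family (junk value if the support is infinite) *)
Definition fsum (T : eqType) (F : T -> R) : R :=
  \sum_(x <- undup (epsilon (inhabits (@nil T))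
                     (fun s : seq T => forall x, F x != 0 -> x \in s))) F x.

Variable A : lmodType R.

Definition nu_algebra (mul : A -> A -> A) : Prop :=
  [/\ forall x y z, mul x (mul y z) = mul (mul x y) z,
      forall (r : R) x y z, mul (r *: x + y) z = r *: mul x z + mul y z &
      forall (r : R) x y z, mul z (r *: x + y) = r *: mul z x + mul z y].

Definition represents (J : eqType) (P : J -> Prop) (b : J -> A) (c : J -> R)
  (x : A) : Prop :=
  exists s : seq J,
    [/\ uniq s, forall j, j \in s -> P j, forall j, c j != 0 -> j \in s &
        x = \sum_(j <- s) c j *: b j].

Definition basis_on (J : eqType) (P : J -> Prop) (b : J -> A) (S : A -> Prop)
  : Prop :=
  [/\ forall j, P j -> S (b j),
      forall x, S x -> exists c, represents P b c x &
      forall x c1 c2, represents P b c1 x -> represents P b c2 x -> c1 = c2].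

Definition is_basis (J : eqType) (b : J -> A) : Prop :=
  basis_on (fun _ => True) b (fun _ => True).

Definition free_mod (S : A -> Prop) : Prop :=
  exists (K : eqType) (b : K -> A), basis_on (fun _ => True) b S.

Definition coord (J : eqType) (b : J -> A) (x : A) : J -> R :=
  epsilon (inhabits (fun _ : J => 0))
          (fun c => represents (fun _ => True) b c x).

Definition block (I : Type) (mul : A -> A -> A) (e : I -> A) (i i' : I)
  (x : A) : Prop :=
  exists z, x = mul (mul (e i) z) (e i').

Definition orth_idem (I : eqType) (mul : A -> A -> A) (e : I -> A) : Prop :=
  forall i i', mul (e i) (e i') = if i == i' then e i else 0.

Definition block_decomp (I : eqType) (mul : A -> A -> A) (e : I -> A) : Prop :=
  (forall x, exists (s : seq (I * I)) (y : I * I -> A),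
      [/\ uniq s, forall p, p \in s -> block mul e p.1 p.2 (y p) &
          x = \sum_(p <- s) y p]) /\
  (forall (s : seq (I * I)) (y : I * I -> A), uniq s ->
      (forall p, p \in s -> block mul e p.1 p.2 (y p)) ->
      \sum_(p <- s) y p = 0 -> forall p, p \in s -> y p = 0).

(* formal series f = sum_j f_j a_j are functions J -> R *)

Definition fmul_terms (J : eqType) (mul : A -> A -> A) (a : J -> A)
  (f g : J -> R) (k : J) : J * J -> R :=
  fun p => f p.1 * g p.2 * coord a (mul (a p.1) (a p.2)) k.

Definition fmul (J : eqType) (mul : A -> A -> A) (a : J -> A)
  (f g : J -> R) : J -> R :=
  fun k => fsum (fmul_terms mul a f g k).

Definition funit (I J : eqType) (a : J -> A) (e : I -> A) : J -> R :=
  fun j => fsum (fun i : I => coord a (e i) j).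

Definition ldag (I J : eqType) (ro : J -> I) (f : J -> R) : Prop :=
  forall i, exists s : seq J, forall j, f j != 0 -> ro j = i -> j \in s.

Definition rdag (I J : eqType) (co : J -> I) (f : J -> R) : Prop :=
  forall i, exists s : seq J, forall j, f j != 0 -> co j = i -> j \in s.

Definition fmul_welldef (J : eqType) (mul : A -> A -> A) (a : J -> A)
  (P : (J -> R) -> Prop) : Prop :=
  forall f g, P f -> P g ->
    (forall k, fin_supp (fmul_terms mul a f g k)) /\ P (fmul mul a f g).

Definition assoc_unital_alg (J : Type) (P : (J -> R) -> Prop)
  (m : (J -> R) -> (J -> R) -> (J -> R)) (u : J -> R) : Prop :=
  P (fun _ => 0) /\
  (forall r f g, P f -> P g -> P (fun j => r * f j + g j)) /\
  (forall f g, P f -> P g -> P (m f g)) /\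
  (forall f g h, P f -> P g -> P h -> m f (m g h) = m (m f g) h) /\
  (forall r f g h, P f -> P g -> P h ->
     m (fun j => r * f j + g j) h = (fun j => r * m f h j + m g h j)) /\
  (forall r f g h, P f -> P g -> P h ->
     m h (fun j => r * f j + g j) = (fun j => r * m h f j + m h g j)) /\
  P u /\
  (forall f, P f -> m u f = f /\ m f u = f).

End Defs.

(* Main.v *)
Require Import Defs.
From HB Require Import structures.
From mathcomp Require Import all_boot all_algebra ring.
From Stdlib Require Import ClassicalEpsilon FunctionalExtensionality Classical.

Set Implicit Arguments.
Unset Strict Implicit.
Unset Printing Implicit Defensive.

Import GRing.Theory.
Local Open Scope ring_scope.

Lemma sum_cover (V : nmodType) (T : eqType) (F : T -> V) (L1 L2 : seq T) :
  uniq L1 -> uniq L2 ->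
  (forall x, F x != 0 -> x \in L1) -> (forall x, F x != 0 -> x \in L2) ->
  \sum_(x <- L1) F x = \sum_(x <- L2) F x.
Proof.
move=> u1 u2 c1 c2.
have H : forall L, \sum_(x <- L) F x = \sum_(x <- [seq x <- L | F x != 0]) F x.
  move=> L; rewrite big_filter [RHS]big_mkcond. apply: eq_bigr => x _.
  by case: (F x =P 0) => [->|].
rewrite H [RHS]H; apply: perm_big; apply: uniq_perm; try exact: filter_uniq.
move=> x; rewrite !mem_filter; case Fx: (F x != 0) => //=.
by rewrite (c1 _ Fx) (c2 _ Fx).
Qed.

Lemma fsum_eq (R : comPzRingType) (T : eqType) (F : T -> R) (L : seq T) :
  (forall x, F x != 0 -> x \in L) -> fsum F = \sum_(x <- undup L) F x.
Proof.
move=> cL; rewrite /fsum.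
set P := (fun s : seq T => forall x, F x != 0 -> x \in s).
have : P (epsilon (inhabits (@nil T)) P).
  by apply: epsilon_spec; exists L.
move=> cE; apply: sum_cover; rewrite ?undup_uniq // => x Fx; rewrite mem_undup.
  exact: cE.
exact: cL.
Qed.

Lemma fsum_neq0 (R : comPzRingType) (T : eqType) (F : T -> R) :
  fsum F != 0 -> exists x, F x != 0.
Proof.
move=> H; destruct (classic (exists x, F x != 0)) as [|N] => //.
move: H; rewrite /fsum big1 ?eqxx // => x _.
apply/eqP; apply: negbNE; apply/negP => Fx; apply: N; by exists x.
Qed.

Lemma fsum0 (R : comPzRingType) (T : eqType) (F : T -> R) :
  (forall x, F x = 0) -> fsum F = 0.
Proof.
move=> H; rewrite (@fsum_eq _ _ _ [::]) ?big_nil // => x; by rewrite H eqxx.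
Qed.

Lemma fsum_lin (R : comPzRingType) (T : eqType) (r : R) (F G : T -> R) :
  fin_supp F -> fin_supp G -> fsum (fun x => r * F x + G x) = r * fsum F + fsum G.
Proof.
move=> [s1 H1] [s2 H2].
rewrite !(@fsum_eq _ _ _ (s1 ++ s2)).
- by rewrite big_split /= mulr_sumr.
- by move=> x /H2; rewrite mem_cat orbC => ->.
- by move=> x /H1; rewrite mem_cat => ->.
move=> x H; rewrite mem_cat; case: (F x =P 0) => [E|/eqP /H1 -> //].
by rewrite H2 ?orbT //; move: H; rewrite E mulr0 add0r.
Qed.

Lemma cov_union (T U : eqType) (L : seq T) (Q : T -> U -> Prop) :
  (forall x, x \in L -> exists s : seq U, forall y, Q x y -> y \in s) ->
  exists s : seq U, forall x y, x \in L -> Q x y -> y \in s.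
Proof.
elim: L => [|x L IH] H; first by exists [::].
have [s1 H1] := H x (mem_head _ _).
have [s2 H2] : exists s : seq U, forall x y, x \in L -> Q x y -> y \in s.
  by apply: IH => x' hx'; apply: H; rewrite in_cons hx' orbT.
exists (s1 ++ s2) => x' y; rewrite in_cons mem_cat => /orP [/eqP -> Q'|hx Q'].
  by rewrite H1.
by rewrite (H2 x') ?orbT.
Qed.
Lemma alg4 (R : comPzRingType) (J : eqType) (f g h : J -> R) (C : J -> J -> J -> R) k
  (S1 S2 S3 M : seq J) :
  (forall s t u, s \in S1 -> t \in S2 -> u \in S3 ->
     \sum_(m <- M) C s t m * C m u k = \sum_(m <- M) C t u m * C s m k) ->
  \sum_(s <- S1) \sum_(m <- M)
     f s * (\sum_(t <- S2) \sum_(u <- S3) g t * h u * C t u m) * C s m k =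
  \sum_(m <- M) \sum_(u <- S3)
     (\sum_(s <- S1) \sum_(t <- S2) f s * g t * C s t m) * h u * C m u k.
Proof.
move=> H4.
have -> : \sum_(s <- S1) \sum_(m <- M)
     f s * (\sum_(t <- S2) \sum_(u <- S3) g t * h u * C t u m) * C s m k =
  \sum_(s <- S1) \sum_(t <- S2) \sum_(u <- S3) (f s * g t * h u) *
     \sum_(m <- M) C t u m * C s m k.
  apply: eq_bigr => s _.
  under eq_bigr => m _ do rewrite mulr_sumr mulr_suml.
  rewrite exchange_big; apply: eq_bigr => t _.
  under eq_bigr => m _ do rewrite mulr_sumr mulr_suml.
  rewrite exchange_big; apply: eq_bigr => u _.
  rewrite mulr_sumr; apply: eq_bigr => m _.
  by ring.
have -> : \sum_(m <- M) \sum_(u <- S3)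
     (\sum_(s <- S1) \sum_(t <- S2) f s * g t * C s t m) * h u * C m u k =
  \sum_(s <- S1) \sum_(t <- S2) \sum_(u <- S3) (f s * g t * h u) *
     \sum_(m <- M) C s t m * C m u k.
  rewrite exchange_big.
  under eq_bigr => u _ do (under eq_bigr => m _ do rewrite !mulr_suml; rewrite exchange_big).
  rewrite exchange_big; apply: eq_bigr => s _.
  under eq_bigr => u _ do (under eq_bigr => m _ do rewrite !mulr_suml; rewrite exchange_big).
  rewrite exchange_big; apply: eq_bigr => t _.
  apply: eq_bigr => u _; rewrite mulr_sumr; apply: eq_bigr => m _.
  by ring.
apply: eq_big_seq => s hs; apply: eq_big_seq => t ht; apply: eq_big_seq => u hu.
by rewrite H4.
Qed.

Section Alg.
Variables (R : comPzRingType) (A : lmodType R) (mul : A -> A -> A)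
  (I J : eqType) (e : I -> A) (a : J -> A) (ro co : J -> I).
Hypothesis Hassoc : forall x y z, mul x (mul y z) = mul (mul x y) z.
Hypothesis HlinL : forall (r : R) x y z, mul (r *: x + y) z = r *: mul x z + mul y z.
Hypothesis HlinR : forall (r : R) x y z, mul z (r *: x + y) = r *: mul z x + mul z y.
Hypothesis Horth : orth_idem mul e.
Hypothesis Hbasis : is_basis a.
Hypothesis He : forall i, exists j, a j = e i.
Hypothesis Hro : forall j, mul (e (ro j)) (a j) = a j.
Hypothesis Hco : forall j, mul (a j) (e (co j)) = a j.

Lemma amul0l z : mul 0 z = 0.
Proof. by have := HlinL (-1) 0 0 z; rewrite scaler0 addr0 scaleN1r addNr. Qed.
Lemma amul0r z : mul z 0 = 0.
Proof. by have := HlinR (-1) 0 0 z; rewrite scaler0 addr0 scaleN1r addNr. Qed.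
Lemma amulZl r x z : mul (r *: x) z = r *: mul x z.
Proof. by have := HlinL r x 0 z; rewrite addr0 amul0l addr0. Qed.
Lemma amulZr r x z : mul z (r *: x) = r *: mul z x.
Proof. by have := HlinR r x 0 z; rewrite addr0 amul0r addr0. Qed.
Lemma amulDl x y z : mul (x + y) z = mul x z + mul y z.
Proof. by have := HlinL 1 x y z; rewrite !scale1r. Qed.
Lemma amulDr x y z : mul z (x + y) = mul z x + mul z y.
Proof. by have := HlinR 1 x y z; rewrite !scale1r. Qed.
Lemma amul_suml (T : Type) (L : seq T) (F : T -> A) z :
  mul (\sum_(i <- L) F i) z = \sum_(i <- L) mul (F i) z.
Proof. by elim: L => [|x L IH]; rewrite ?big_nil ?amul0l // !big_cons amulDl IH. Qed.
Lemma amul_sumr (T : Type) (L : seq T) (F : T -> A) z :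
  mul z (\sum_(i <- L) F i) = \sum_(i <- L) mul z (F i).
Proof. by elim: L => [|x L IH]; rewrite ?big_nil ?amul0r // !big_cons amulDr IH. Qed.

Notation rep := (represents (fun _ => True) a).

Lemma coord_rep x : rep (Defs.coord a x) x.
Proof.
rewrite /Defs.coord; apply: (@epsilon_spec _ _ (fun c => rep c x)).
by case: Hbasis => _ H _; apply: H.
Qed.

Lemma coord_uniq c x : rep c x -> Defs.coord a x = c.
Proof. by case: Hbasis => _ _ H r; apply: (H x); [apply: coord_rep|]. Qed.

Lemma rep_sum c x L : rep c x -> uniq L -> (forall j, c j != 0 -> j \in L) ->
  x = \sum_(j <- L) c j *: a j.
Proof.
move=> [s [us _ cs ->]] uL cL; apply: sum_cover => // j H.
  by apply: cs; apply/negP => /eqP E; move: H; rewrite E scale0r eqxx.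
by apply: cL; apply/negP => /eqP E; move: H; rewrite E scale0r eqxx.
Qed.

Lemma coord_sum x L : uniq L -> (forall j, Defs.coord a x j != 0 -> j \in L) ->
  x = \sum_(j <- L) Defs.coord a x j *: a j.
Proof. by apply: rep_sum; apply: coord_rep. Qed.

Lemma coord_supp x : exists s : seq J, forall j, Defs.coord a x j != 0 -> j \in s.
Proof. by have [s [_ _ H _]] := coord_rep x; exists s. Qed.

Lemma coordZD r x y : Defs.coord a (r *: x + y) = fun j => r * Defs.coord a x j + Defs.coord a y j.
Proof.
apply: coord_uniq.
have [sx [ux _ cx ex]] := coord_rep x.
have [sy [uy _ cy ey]] := coord_rep y.
exists (undup (sx ++ sy)); split; rewrite ?undup_uniq //.
  move=> j H; rewrite mem_undup mem_cat; apply/orP.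
  case: (Defs.coord a x j =P 0) => [E|/eqP E]; last by left; apply: cx.
  right; apply: cy; move: H; by rewrite E mulr0 add0r.
have Hx : forall k, Defs.coord a x k != 0 -> k \in undup (sx ++ sy).
  by move=> k H; rewrite mem_undup mem_cat (cx _ H).
have Hy : forall k, Defs.coord a y k != 0 -> k \in undup (sx ++ sy).
  by move=> k H; rewrite mem_undup mem_cat (cy _ H) orbT.
rewrite {1}(rep_sum (coord_rep x) (undup_uniq _) Hx).
rewrite {1}(rep_sum (coord_rep y) (undup_uniq _) Hy).
rewrite scaler_sumr -big_split /=; apply: eq_bigr => k _.
by rewrite scalerA scalerDl.
Qed.

Lemma coord0 : Defs.coord a 0 = fun _ => 0.
Proof. apply: coord_uniq; exists [::]; split => //; try by rewrite big_nil.
by move=> j; rewrite eqxx. Qed.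

Lemma coord_basis j0 : Defs.coord a (a j0) = fun j => (j == j0)%:R.
Proof.
apply: coord_uniq; exists [:: j0]; split => //.
  move=> j; by case: (j =P j0) => [->|]; rewrite ?mem_head ?eqxx.
by rewrite big_seq1 eqxx scale1r.
Qed.

Lemma coordZ r x j : Defs.coord a (r *: x) j = r * Defs.coord a x j.
Proof. by rewrite -[r *: x]addr0 coordZD coord0 addr0. Qed.

Lemma coord_bigsum (T : Type) (L : seq T) (r : T -> R) (v : T -> A) k :
  Defs.coord a (\sum_(i <- L) r i *: v i) k = \sum_(i <- L) r i * Defs.coord a (v i) k.
Proof.
elim: L => [|x L IH]; first by rewrite !big_nil coord0.
by rewrite !big_cons coordZD IH.
Qed.

Lemma e_a i m : mul (e i) (a m) = if ro m == i then a m else 0.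
Proof.
rewrite -{1}Hro Hassoc Horth.
case: (i =P ro m) => [->|ne]; first by rewrite !eqxx Hro.
case: (ro m =P i) => [E|_]; first by case: ne.
by rewrite amul0l.
Qed.

Lemma a_e m i : mul (a m) (e i) = if co m == i then a m else 0.
Proof.
rewrite -{1}Hco -Hassoc Horth.
case: (co m =P i) => [E|ne] /=; first by rewrite Hco.
by rewrite amul0r.
Qed.

Lemma coord_eL i x k : Defs.coord a (mul (e i) x) k = if ro k == i then Defs.coord a x k else 0.
Proof.
have [s [us _ cs xs]] := coord_rep x.
suff -> : Defs.coord a (mul (e i) x) = fun m => if ro m == i then Defs.coord a x m else 0 by [].
apply: coord_uniq; exists s; split => //.
  by move=> m; case: (ro m == i) => [/cs//|]; rewrite eqxx.
rewrite {1}xs amul_sumr; apply: eq_bigr => m _.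
by rewrite amulZr e_a; case: (ro m == i); rewrite ?scaler0 ?scale0r.
Qed.

Lemma coord_eR i x k : Defs.coord a (mul x (e i)) k = if co k == i then Defs.coord a x k else 0.
Proof.
have [s [us _ cs xs]] := coord_rep x.
suff -> : Defs.coord a (mul x (e i)) = fun m => if co m == i then Defs.coord a x m else 0 by [].
apply: coord_uniq; exists s; split => //.
  by move=> m; case: (co m == i) => [/cs//|]; rewrite eqxx.
rewrite {1}xs amul_suml; apply: eq_bigr => m _.
by rewrite amulZl a_e; case: (co m == i); rewrite ?scaler0 ?scale0r.
Qed.

Notation c s t k := (Defs.coord a (mul (a s) (a t)) k).

Lemma c_ro s t k : c s t k != 0 -> ro k = ro s.
Proof.
have E : mul (a s) (a t) = mul (e (ro s)) (mul (a s) (a t)) by rewrite Hassoc Hro.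
by rewrite E coord_eL; case: (ro k =P ro s) => [-> //|_]; rewrite eqxx.
Qed.

Lemma c_co s t k : c s t k != 0 -> co k = co t.
Proof.
have E : mul (a s) (a t) = mul (mul (a s) (a t)) (e (co t)) by rewrite -Hassoc Hco.
by rewrite E coord_eR; case: (co k =P co t) => [-> //|_]; rewrite eqxx.
Qed.

Lemma c_mid s t k : c s t k != 0 -> ro t = co s.
Proof.
have E : mul (a s) (a t) = mul (a s) (mul (e (co s)) (a t)) by rewrite Hassoc Hco.
by rewrite E e_a; case: (ro t =P co s) => [-> //|_]; rewrite amul0r coord0 eqxx.
Qed.

Lemma F4 s t u k L : uniq L ->
  (forall m, c s t m != 0 -> m \in L) -> (forall m, c t u m != 0 -> m \in L) ->
  \sum_(m <- L) c s t m * c m u k = \sum_(m <- L) c t u m * c s m k.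
Proof.
move=> uL H1 H2.
have E1 : Defs.coord a (mul (mul (a s) (a t)) (a u)) k = \sum_(m <- L) c s t m * c m u k.
  rewrite {1}(coord_sum uL H1) amul_suml.
  under eq_bigr do rewrite amulZl.
  by rewrite coord_bigsum.
have E2 : Defs.coord a (mul (a s) (mul (a t) (a u))) k = \sum_(m <- L) c t u m * c s m k.
  rewrite {1}(coord_sum uL H2) amul_sumr.
  under eq_bigr do rewrite amulZr.
  by rewrite coord_bigsum.
by rewrite -E1 -E2 Hassoc.
Qed.

Lemma terms_nz (f g : J -> R) k p : fmul_terms mul a f g k p != 0 ->
  [/\ f p.1 != 0, g p.2 != 0 & c p.1 p.2 k != 0].
Proof.
rewrite /fmul_terms => H; split; apply/negP => /eqP E; move: H;
  by rewrite E !(mul0r, mulr0) eqxx.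
Qed.

Lemma layer (g : J -> R) (S : seq J) : ldag ro g ->
  exists T : seq J, forall s t, s \in S -> g t != 0 -> ro t = co s -> t \in T.
Proof.
move=> Hg.
have [T HT] := @cov_union _ _ S (fun s t => g t != 0 /\ ro t = co s)
  (fun x _ => let: ex_intro s Hs := Hg (co x) in
     ex_intro _ s (fun y (H : g y != 0 /\ ro y = co x) => Hs y H.1 H.2)).
by exists T => s t sS gt rt; apply: (HT s).
Qed.

Lemma fmul_exp (f g : J -> R) k (S T : seq J) : uniq S -> uniq T ->
  (forall s t, fmul_terms mul a f g k (s, t) != 0 -> s \in S /\ t \in T) ->
  fmul mul a f g k = \sum_(s <- S) \sum_(t <- T) f s * g t * c s t k.
Proof.
move=> uS uT H; rewrite /fmul (@fsum_eq _ _ _ [seq (x, y) | x <- S, y <- T]).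
  rewrite undup_id ?big_allpairs //; apply: allpairs_uniq => //.
  by move=> [? ?] [? ?].
by move=> [s t] /H [hs ht]; apply: allpairs_f.
Qed.

Lemma wd1 (f g : J -> R) k : ldag ro f -> ldag ro g -> fin_supp (fmul_terms mul a f g k).
Proof.
move=> Hf Hg; have [S1 H1] := Hf (ro k); have [T HT] := layer S1 Hg.
exists [seq (x, y) | x <- S1, y <- T] => -[s t] /terms_nz [fs gt cst] /=.
have hs : s \in S1 by apply: H1 => //; rewrite (c_ro cst).
by apply: allpairs_f => //; apply: HT hs gt (c_mid cst).
Qed.

Lemma wd2 (f g : J -> R) : ldag ro f -> ldag ro g -> ldag ro (fmul mul a f g).
Proof.
move=> Hf Hg i; have [S1 H1] := Hf i; have [T HT] := layer S1 Hg.
have [K HK] := @cov_union _ _ [seq (x, y) | x <- S1, y <- T]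
  (fun p k => c p.1 p.2 k != 0) (fun p _ => coord_supp _).
exists K => k /fsum_neq0 [[s t] /terms_nz [fs gt cst]] rk /=.
have hs : s \in S1 by apply: H1 => //; rewrite -(c_ro cst).
apply: (HK (s, t)) => //; apply: allpairs_f => //; exact: HT hs gt (c_mid cst).
Qed.

Lemma ldag0 : ldag ro (fun _ : J => 0 : R).
Proof. by move=> i; exists [::] => j; rewrite eqxx. Qed.

Lemma ldag_lin r (f g : J -> R) : ldag ro f -> ldag ro g -> ldag ro (fun j => r * f j + g j).
Proof.
move=> Hf Hg i; have [s1 H1] := Hf i; have [s2 H2] := Hg i.
exists (s1 ++ s2) => j H rj; rewrite mem_cat.
case: (f j =P 0) => [E|/eqP E]; last by rewrite H1.
by rewrite H2 ?orbT //; move: H; rewrite E mulr0 add0r.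
Qed.

Lemma distL r (f g h : J -> R) k : ldag ro f -> ldag ro g -> ldag ro h ->
  fmul mul a (fun j => r * f j + g j) h k = r * fmul mul a f h k + fmul mul a g h k.
Proof.
move=> Hf Hg Hh; rewrite /fmul -fsum_lin; try exact: wd1.
congr fsum; apply: functional_extensionality => p; rewrite /fmul_terms /=.
by rewrite !mulrDl !mulrA.
Qed.

Lemma distR r (f g h : J -> R) k : ldag ro f -> ldag ro g -> ldag ro h ->
  fmul mul a h (fun j => r * f j + g j) k = r * fmul mul a h f k + fmul mul a h g k.
Proof.
move=> Hf Hg Hh; rewrite /fmul -fsum_lin; try exact: wd1.
congr fsum; apply: functional_extensionality => p; rewrite /fmul_terms /=.
by rewrite mulrDr !mulrDl !mulrA [h p.1 * r]mulrC.
Qed.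

Lemma assoc_k (f g h : J -> R) k : ldag ro f -> ldag ro g -> ldag ro h ->
  fmul mul a f (fmul mul a g h) k = fmul mul a (fmul mul a f g) h k.
Proof.
move=> Hf Hg Hh.
have [S1' H1] := Hf (ro k). pose S1 := undup S1'.
have [S2' H2] := layer S1 Hg. pose S2 := undup S2'.
have [S3' H3] := layer S2 Hh. pose S3 := undup S3'.
have [M' HM] := @cov_union _ _
  ([seq (x, y) | x <- S1, y <- S2] ++ [seq (x, y) | x <- S2, y <- S3])
  (fun p m => c p.1 p.2 m != 0) (fun p _ => coord_supp _).
pose M := undup M'.
have m1 s : f s != 0 -> ro s = ro k -> s \in S1.
  by move=> *; rewrite mem_undup H1.
have m2 s t : s \in S1 -> g t != 0 -> ro t = co s -> t \in S2.
  by move=> *; rewrite mem_undup (H2 s).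
have m3 t u : t \in S2 -> h u != 0 -> ro u = co t -> u \in S3.
  by move=> *; rewrite mem_undup (H3 t).
have mM1 s t m : s \in S1 -> t \in S2 -> c s t m != 0 -> m \in M.
  move=> hs ht cm; rewrite mem_undup; apply: (HM (s, t)) => //.
  by rewrite mem_cat allpairs_f.
have mM2 t u m : t \in S2 -> u \in S3 -> c t u m != 0 -> m \in M.
  move=> ht hu cm; rewrite mem_undup; apply: (HM (t, u)) => //.
  by rewrite mem_cat [X in _ || X]allpairs_f ?orbT.
have uS1 : uniq S1 by apply: undup_uniq.
have uS2 : uniq S2 by apply: undup_uniq.
have uS3 : uniq S3 by apply: undup_uniq.
have uM : uniq M by apply: undup_uniq.
rewrite (@fmul_exp f (fmul mul a g h) k S1 M) //; last first.
  move=> s m /terms_nz [fs /fsum_neq0 [[t u] /terms_nz [gt hu ctu]] csm] /=.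
  have hs := m1 s fs (esym (c_ro csm)).
  have ht := m2 s t hs gt (etrans (esym (c_ro ctu)) (c_mid csm)).
  have hu' := m3 t u ht hu (c_mid ctu).
  by split => //; apply: mM2 ht hu' ctu.
rewrite (@fmul_exp (fmul mul a f g) h k M S3) //; last first.
  move=> m u /terms_nz [/fsum_neq0 [[s t] /terms_nz [fs gt cstm]] hu cmuk] /=.
  have hs := m1 s fs (etrans (esym (c_ro cstm)) (esym (c_ro cmuk))).
  have ht := m2 s t hs gt (c_mid cstm).
  have hu' := m3 t u ht hu (etrans (c_mid cmuk) (c_co cstm)).
  by split => //; apply: mM1 hs ht cstm.
transitivity (\sum_(s <- S1) \sum_(m <- M)
   f s * (\sum_(t <- S2) \sum_(u <- S3) g t * h u * c t u m) * c s m k).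
  apply: eq_big_seq => s hs; apply: eq_bigr => m _.
  case: (c s m k =P 0) => [->|/eqP csm]; first by rewrite !mulr0.
  congr (_ * _ * _); apply: fmul_exp => // t u /terms_nz [gt hu ctu] /=.
  have ht := m2 s t hs gt (etrans (esym (c_ro ctu)) (c_mid csm)).
  by split => //; apply: m3 t u ht hu (c_mid ctu).
transitivity (\sum_(m <- M) \sum_(u <- S3)
   (\sum_(s <- S1) \sum_(t <- S2) f s * g t * c s t m) * h u * c m u k); last first.
  apply: eq_bigr => m _; apply: eq_bigr => u _.
  case: (c m u k =P 0) => [->|/eqP cmuk]; first by rewrite !mulr0.
  congr (_ * _ * _); symmetry; apply: fmul_exp => // s t /terms_nz [fs gt cstm] /=.
  have hs := m1 s fs (etrans (esym (c_ro cstm)) (esym (c_ro cmuk))).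
  by split => //; apply: m2 s t hs gt (c_mid cstm).
apply: (@alg4 _ _ f g h (fun s t m => c s t m)) => s t u hs ht hu.
by apply: F4 => // m; [apply: mM1 | apply: mM2].
Qed.

Hypothesis Hnt : (1 : R) != 0.

Lemma a_nz j : a j != 0.
Proof.
apply/negP => /eqP E; have := coord_basis j; rewrite E coord0.
move=> /(congr1 (fun F => F j)); rewrite eqxx /= => H.
by move: Hnt; rewrite [X in X != 0](_ : _ = (true%:R : R)) // -H eqxx.
Qed.

Lemma a_inj s t : a s = a t -> s = t.
Proof.
move=> E; have := coord_basis s; rewrite E coord_basis.
move=> /(congr1 (fun F => F s)); rewrite eqxx /=.
case: (s =P t) => // _ H; move: Hnt.
by rewrite [X in X != 0](_ : _ = (true%:R : R)) // -H eqxx.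
Qed.

Lemma e_inj i i' : e i = e i' -> i = i'.
Proof.
move=> E; case: (i =P i') => // ne.
have [j Ej] := He i.
have : e i = 0.
  have := Horth i i; rewrite eqxx => <-.
  rewrite {2}E Horth; case: (i =P i') => // _.
by rewrite -Ej => /eqP; rewrite (negbTE (a_nz j)).
Qed.

Lemma funit_nz j : funit a e j != 0 -> exists i, a j = e i.
Proof.
rewrite /funit => /fsum_neq0 [i]; have [j' E] := He i.
rewrite -E coord_basis; case: (j =P j') => [->|_]; first by exists i.
by rewrite eqxx.
Qed.

Lemma funit_val j i : a j = e i -> funit a e j = 1.
Proof.
move=> E; rewrite /funit (@fsum_eq _ _ _ [:: i]) /= ?big_seq1.
  by rewrite -E coord_basis eqxx.
move=> i'; have [j' E'] := He i'; rewrite -E' coord_basis.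
case: (j =P j') => [Ej|_]; last by rewrite eqxx.
by move=> _; rewrite (@e_inj i' i) ?mem_head // -E' -Ej E.
Qed.

Lemma ldag_unit : ldag ro (funit a e).
Proof.
move=> i; have [j0 E0] := He i; exists [:: j0] => j /funit_nz [i' E] rj.
have : a j = mul (e i) (e i') by rewrite -E -rj Hro.
rewrite Horth; case: (i =P i') => [_|_]; last by move=> /eqP; rewrite (negbTE (a_nz j)).
by rewrite -E0 => /a_inj ->; rewrite mem_head.
Qed.

Lemma unitL (f : J -> R) k : fmul mul a (funit a e) f k = f k.
Proof.
have [j0 E0] := He (ro k).
rewrite /fmul (@fsum_eq _ _ _ [:: (j0, k)]) /= ?big_seq1.
  by rewrite /fmul_terms /= (funit_val E0) E0 e_a eqxx coord_basis eqxx mul1r mulr1.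
move=> [s t] /terms_nz [us ft cst] /=.
have [i E] := funit_nz us.
move: cst; rewrite /= E e_a; case: (ro t =P i) => [rt|_]; last by rewrite coord0 eqxx.
rewrite coord_basis; case: (k =P t) => [kt _|_]; last by rewrite eqxx.
have -> : s = j0 by apply: a_inj; rewrite E0 E -rt kt.
by rewrite kt mem_head.
Qed.

Lemma unitR (f : J -> R) k : fmul mul a f (funit a e) k = f k.
Proof.
have [j1 E1] := He (co k).
rewrite /fmul (@fsum_eq _ _ _ [:: (k, j1)]) /= ?big_seq1.
  by rewrite /fmul_terms /= (funit_val E1) E1 a_e eqxx coord_basis eqxx mulr1 mulr1.
move=> [s t] /terms_nz [fs ut cst] /=.
have [i E] := funit_nz ut.
move: cst; rewrite /= E a_e; case: (co s =P i) => [cs|_]; last by rewrite coord0 eqxx.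
rewrite coord_basis; case: (k =P s) => [ks _|_]; last by rewrite eqxx.
have -> : t = j1 by apply: a_inj; rewrite E1 E -cs ks.
by rewrite ks mem_head.
Qed.

Lemma main_ldag : fmul_welldef mul a (ldag ro) /\
  assoc_unital_alg (ldag ro) (fmul mul a) (funit a e).
Proof.
split.
  by move=> f g Hf Hg; split; [move=> k; apply: wd1 | apply: wd2].
split; first exact: ldag0.
split; first by move=> r f g; apply: ldag_lin.
split; first by move=> f g; apply: wd2.
split.
  by move=> f g h Hf Hg Hh; apply: functional_extensionality => k; apply: assoc_k.
split.
  by move=> r f g h Hf Hg Hh; apply: functional_extensionality => k; apply: distL.
split.
  by move=> r f g h Hf Hg Hh; apply: functional_extensionality => k; apply: distR.
split; first exact: ldag_unit.
by move=> f Hf; split; apply: functional_extensionality => k; [apply: unitL | apply: unitR].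
Qed.

End Alg.


Lemma swap_inj (T U : Type) : injective (fun p : T * U => (p.2, p.1)).
Proof. by move=> [? ?] [? ?] [-> ->]. Qed.

Lemma fsum_swap (R : comPzRingType) (T U : eqType) (F : T * U -> R) :
  fin_supp F -> fsum (fun p : U * T => F (p.2, p.1)) = fsum F.
Proof.
move=> [s H]; rewrite (@fsum_eq _ _ _ s) //.
rewrite (@fsum_eq _ _ _ [seq (p.2, p.1) | p <- s]).
  rewrite undup_map_inj ?big_map; last by move=> [? ?] [? ?] [-> ->].
  by apply: eq_bigr => -[x y] _.
move=> [u t] /H hs; by apply/mapP; exists (t, u).
Qed.

Lemma fin_supp_swap (R : comPzRingType) (T U : eqType) (F : T * U -> R) :
  fin_supp F -> fin_supp (fun p : U * T => F (p.2, p.1)).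
Proof.
move=> [s H]; exists [seq (p.2, p.1) | p <- s] => [[u t]] /H hs.
by apply/mapP; exists (t, u).
Qed.

Theorem lemma1p1 (R : comPzRingType) (A : lmodType R) (mul : A -> A -> A)
  (I J : eqType) (e : I -> A) (a : J -> A) (ro co : J -> I) :
  nu_algebra mul ->
  orth_idem mul e ->
  block_decomp mul e ->
  (forall i i', free_mod (block mul e i i')) ->
  is_basis a ->
  (forall i i', basis_on (fun j => mul (mul (e i) (a j)) (e i') != 0)
                         (fun j => mul (mul (e i) (a j)) (e i'))
                         (block mul e i i')) ->
  (forall j, exists i i' k, a j = mul (mul (e i) (a k)) (e i')) ->
  (forall i i' k, mul (mul (e i) (a k)) (e i') != 0 ->
     exists j, a j = mul (mul (e i) (a k)) (e i')) ->
  (forall i, exists j, a j = e i) ->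
  (forall j, mul (e (ro j)) (a j) = a j) ->
  (forall j, mul (a j) (e (co j)) = a j) ->
  [/\ fmul_welldef mul a (ldag ro),
      assoc_unital_alg (ldag ro) (fmul mul a) (funit a e),
      fmul_welldef mul a (rdag co),
      assoc_unital_alg (rdag co) (fmul mul a) (funit a e) &
      assoc_unital_alg (fun f => ldag ro f /\ rdag co f) (fmul mul a) (funit a e)].
Proof.
move=> [Hassoc HlinL HlinR] Horth _ _ Hbasis _ _ _ He Hro Hco.
case: (boolP ((1 : R) == 0)) => [/eqP H10|Hnt].
  have Z : forall r : R, r = 0 by move=> r; rewrite -[r]mulr1 H10 mulr0.
  have FE : forall (T : Type) (F G : T -> R), F = G.
    by move=> T F G; apply: functional_extensionality => x; rewrite (Z (F x)) (Z (G x)).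
  have ldagT : forall f : J -> R, ldag ro f by move=> f i; exists [::] => j; rewrite (Z (f j)) eqxx.
  have rdagT : forall f : J -> R, rdag co f by move=> f i; exists [::] => j; rewrite (Z (f j)) eqxx.
  have finT : forall (T : eqType) (F : T -> R), fin_supp F.
    by move=> T F; exists [::] => x; rewrite (Z (F x)) eqxx.
  have AU : forall P : (J -> R) -> Prop, (forall f, P f) ->
      assoc_unital_alg P (fmul mul a) (funit a e).
    move=> P HP; do !split => //; intros; apply: FE.
  split.
  - by move=> f g _ _; split => //; apply: ldagT.
  - by apply: AU.
  - by move=> f g _ _; split => //; apply: rdagT.
  - by apply: AU.
  - by apply: AU => f; split.
have [WL AL] := main_ldag Hassoc HlinL HlinR Horth Hbasis He Hro Hco Hnt.
pose mulop := fun x y => mul y x.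
have Horth' : orth_idem mulop e.
  move=> i i'; rewrite /mulop Horth eq_sym.
  by case: (i =P i') => [->|].
have [WR AR] := @main_ldag R A mulop I J e a co ro
  (fun x y z => esym (Hassoc z y x))
  (fun r x y z => HlinR r x y z) (fun r x y z => HlinL r x y z)
  Horth' Hbasis He Hco Hro Hnt.
have termsE : forall (f g : J -> R) k,
    fmul_terms mul a f g k = fun p => fmul_terms mulop a g f k (p.2, p.1).
  move=> f g k; apply: functional_extensionality => p.
  by rewrite /fmul_terms /mulop /= [g _ * f _]mulrC.
have fmul_eq : forall f g, rdag co f -> rdag co g ->
    fmul mul a f g = fmul mulop a g f.
  move=> f g Hf Hg; apply: functional_extensionality => k.
  rewrite /fmul termsE; apply: fsum_swap.
  exact: ((WR g f Hg Hf).1 k).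
have WR' : fmul_welldef mul a (rdag co).
  move=> f g Hf Hg; have [W1 W2] := WR g f Hg Hf; split.
    by move=> k; rewrite termsE; apply: fin_supp_swap.
  by rewrite fmul_eq.
case: AR => [R0 [Rlin [Rcl [Ras [RdL [RdR [Ru Runit]]]]]]].
have AR' : assoc_unital_alg (rdag co) (fmul mul a) (funit a e).
  have Rcl' : forall f g, rdag co f -> rdag co g -> rdag co (fmul mul a f g).
    by move=> f g Hf Hg; rewrite fmul_eq //; apply: Rcl.
  split; first exact: R0.
  split; first exact: Rlin.
  split; first exact: Rcl'.
  split.
    move=> f g h Hf Hg Hh.
    rewrite (fmul_eq _ _ Hf (Rcl' _ _ Hg Hh)) (fmul_eq _ _ Hg Hh).
    rewrite (fmul_eq _ _ (Rcl' _ _ Hf Hg) Hh) (fmul_eq _ _ Hf Hg).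
    by symmetry; apply: Ras.
  split.
    move=> r f g h Hf Hg Hh.
    rewrite (fmul_eq _ _ (Rlin r f g Hf Hg) Hh) (fmul_eq _ _ Hf Hh) (fmul_eq _ _ Hg Hh).
    by apply: RdR.
  split.
    move=> r f g h Hf Hg Hh.
    rewrite (fmul_eq _ _ Hh (Rlin r f g Hf Hg)) (fmul_eq _ _ Hh Hf) (fmul_eq _ _ Hh Hg).
    by apply: RdL.
  split; first exact: Ru.
  move=> f Hf; rewrite (fmul_eq _ _ Ru Hf) (fmul_eq _ _ Hf Ru).
  by have [? ?] := Runit f Hf; split.
split => //.
case: AL => [L0 [Llin [Lcl [Las [LdL [LdR [Lu Lunit]]]]]]].
have Rcl' : forall f g, rdag co f -> rdag co g -> rdag co (fmul mul a f g).
  by move=> f g Hf Hg; rewrite fmul_eq //; apply: Rcl.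
split; first by split.
split; first by move=> r f g [? ?] [? ?]; split; [apply: Llin | apply: Rlin].
split; first by move=> f g [? ?] [? ?]; split; [apply: Lcl | apply: Rcl'].
split; first by move=> f g h [? ?] [? ?] [? ?]; apply: Las.
split; first by move=> r f g h [? ?] [? ?] [? ?]; apply: LdL.
split; first by move=> r f g h [? ?] [? ?] [? ?]; apply: LdR.
split; first by split.
by move=> f [? ?]; apply: Lunit.
Qed.
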